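(* Let $\mu>0$, let $a\in\left(-\frac{2\mu}{9},0\right)\cup\left(0,\frac{4\mu}{9}\right)$ be real and let $s_1\in\left[\frac{2\mu}{3},\infty\right)$. Define $$H(\tilde z;s_1,a)=\frac{27a^2\tilde z\,(2s_1-3a)}{27a^3\tilde z-27a^2\tilde z\,s_1-(\tilde z-1)^2s_1^3},\qquad \beta_1(a,s_1)=\frac{27a^2}{s_1^3}(3a-2s_1),$$ and $F(\tilde z;s_1,a)=H(\tilde z;s_1,a)/\beta_1(a,s_1)$. Then $F(\cdot\,;s_1,a)$ is a schlicht function on the unit disc, i.e. it is holomorphic and injective on $\{|\tilde z|<1\}$ with $F(0)=0$ and $F'(0)=1$; equivalently, $H(\cdot\,;s_1,a)$ is univalent on the unit disc $|\tilde z|<1$.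
   Context: A function is univalent on a domain if it is holomorphic and injective there. A schlicht function is a univalent function $f$ on the open unit disc with $f(0)=0$ and $f'(0)=1$. *)

(* Defs.v *)
From Stdlib Require Import Reals.
From Coquelicot Require Import Coquelicot.
Open Scope R_scope.

Definition unit_disc (z : C) : Prop := Cmod z < 1.

Definition holomorphic_on (D : C -> Prop) (f : C -> C) : Prop :=
  forall z, D z -> @ex_derive C_AbsRing C_NormedModule f z.

Definition univalent_on (D : C -> Prop) (f : C -> C) : Prop :=
  holomorphic_on D f /\ (forall z w, D z -> D w -> f z = f w -> z = w).

Definition schlicht (f : C -> C) : Prop :=
  univalent_on unit_disc f /\ f (RtoC 0) = RtoC 0 /\
  @is_derive C_AbsRing C_NormedModule f (RtoC 0) (RtoC 1).

Definition H (s1 a : R) (z : C) : C :=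
  (RtoC (27 * a ^ 2 * (2 * s1 - 3 * a)) * z /
   (RtoC (27 * a ^ 3) * z - RtoC (27 * a ^ 2 * s1) * z
    - (z - RtoC 1) * (z - RtoC 1) * RtoC (s1 ^ 3)))%C.

Definition beta1 (a s1 : R) : R := 27 * a ^ 2 / s1 ^ 3 * (3 * a - 2 * s1).

Definition F (s1 a : R) (z : C) : C := (H s1 a z / RtoC (beta1 a s1))%C.

(* Main.v *)
Require Import Defs.
From Stdlib Require Import Reals Lra.
From Coquelicot Require Import Coquelicot.
Open Scope R_scope.


Notation derC f x l := (@is_derive C_AbsRing (AbsRing_NormedModule C_AbsRing) f x l).
Definition Dn (A B S : R) (z : C) : C :=
  (RtoC A * z - RtoC B * z - (z - RtoC 1) * (z - RtoC 1) * RtoC S)%C.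
Lemma is_derive_eqC (f : C -> C) x l l' :
  derC f x l -> l = l' -> derC f x l'.
Proof. intros H E; subst; exact H. Qed.
Lemma Ccomm : forall n m : C_AbsRing, mult n m = mult m n.
Proof. intros; apply Cmult_comm. Qed.
Lemma mC : forall x y : C_AbsRing, mult x y = Cmult x y. Proof. reflexivity. Qed.
Lemma pC : forall x y : C_AbsRing, plus x y = Cplus x y. Proof. reflexivity. Qed.
Lemma sC : forall x y : C_AbsRing, minus x y = Cminus x y. Proof. reflexivity. Qed.
Lemma zC : (@zero C_AbsRing) = RtoC 0. Proof. reflexivity. Qed.
Lemma oC : (@one C_AbsRing) = RtoC 1. Proof. reflexivity. Qed.
Lemma is_derive_Cinv (z0 : C) : z0 <> RtoC 0 ->
  derC (fun z => Cinv z) z0 (Copp (Cinv (z0 * z0))).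
Proof.
  intros Hz0.
  split; [apply is_linear_scal_l|].
  intros x Hx. apply (@is_filter_lim_locally_unique C_AbsRing (AbsRing_NormedModule C_AbsRing)) in Hx. subst x.
  intros eps.
  assert (Hr : 0 < Cmod z0) by (apply Cmod_gt_0; exact Hz0).
  set (r := Cmod z0) in *.
  assert (Hd : 0 < Rmin (r/2) (eps * r ^ 3 / 2)).
  { apply Rmin_case; [lra|]. pose proof (cond_pos eps). apply Rmult_lt_0_compat; [|lra].
    apply Rmult_lt_0_compat; [lra|]. apply pow_lt; lra. }
  exists (mkposreal _ Hd). intros y Hy.
  unfold ball in Hy; simpl in Hy; unfold AbsRing_ball in Hy.
  change (Cmod (y - z0) < Rmin (r / 2) (eps * r ^ 3 / 2)) in Hy.
  change (Cmod (/ y - / z0 - (y - z0) * (- / (z0 * z0))) <= eps * Cmod (y - z0)).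
  set (d := Cmod (y - z0)) in *.
  assert (Hd1 : d < r/2) by (eapply Rlt_le_trans; [exact Hy| apply Rmin_l]).
  assert (Hd2 : d < eps * r^3/2) by (eapply Rlt_le_trans; [exact Hy| apply Rmin_r]).
  assert (Hy0 : r / 2 < Cmod y).
  { assert (E : z0 = (y + (z0 - y))%C) by ring.
    pose proof (Cmod_triangle y (z0 - y)). rewrite <- E in H.
    assert (Cmod (z0 - y) = d).
    { unfold d. replace (z0 - y)%C with (Copp (y - z0)) by ring. apply Cmod_opp. }
    fold r in H. lra. }
  assert (Hyn : y <> RtoC 0).
  { intro E. rewrite E, Cmod_0 in Hy0. lra. }
  replace (/ y - / z0 - (y - z0) * (- / (z0 * z0)))%C
    with ((y - z0) * (y - z0) / (y * (z0 * z0)))%C by (field; auto).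
  rewrite Cmod_div by (apply Cmult_neq_0; auto; apply Cmult_neq_0; auto).
  rewrite !Cmod_mult. fold d r.
  assert (Hd0 : 0 <= d) by apply Cmod_ge_0.
  apply Rle_div_l. apply Rmult_lt_0_compat; [lra|nra].
  assert (d * d <= eps * d * (Cmod y * (r * r))); [|nra].
  assert (eps * r^3/2 <= eps * (Cmod y * (r*r))).
  { pose proof (cond_pos eps).
    assert (r/2*(r*r) <= Cmod y * (r*r)) by (apply Rmult_le_compat_r; nra).
    replace (eps * r^3/2) with (eps * (r/2*(r*r))) by (simpl; field).
    apply Rmult_le_compat_l; lra. }
  nra.
Qed.

Lemma der_D A B S z : derC (Dn A B S) z
   (RtoC A - RtoC B - (2 * (z - RtoC 1)) * RtoC S)%C.
Proof.
  apply (is_derive_ext (fun t : C_AbsRing => @minus C_AbsRing (minus (mult (RtoC A) t) (mult (RtoC B) t)) (mult (mult (minus t one) (minus t one)) (RtoC S)))).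
  { intro t. reflexivity. }
  pose (V := AbsRing_NormedModule C_AbsRing).
  pose proof (is_derive_const (K:=C_AbsRing) (V:=V) (RtoC A) z) as h1.
  pose proof (is_derive_const (K:=C_AbsRing) (V:=V) (RtoC B) z) as h1b.
  pose proof (is_derive_const (K:=C_AbsRing) (V:=V) (RtoC S) z) as h1s.
  pose proof (is_derive_const (K:=C_AbsRing) (V:=V) (@one C_AbsRing) z) as h1o.
  pose proof (is_derive_id (K:=C_AbsRing) z) as h2.
  pose proof (is_derive_mult _ _ _ _ _ h1 h2 Ccomm) as h3.
  pose proof (is_derive_mult _ _ _ _ _ h1b h2 Ccomm) as h4.
  pose proof (is_derive_minus (V:=V) _ _ _ _ _ h2 h1o) as h5.
  pose proof (is_derive_mult _ _ _ _ _ h5 h5 Ccomm) as h6.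
  pose proof (is_derive_mult _ _ _ _ _ h6 h1s Ccomm) as h7.
  pose proof (is_derive_minus (V:=V) _ _ _ _ _ h3 h4) as h8.
  pose proof (is_derive_minus (V:=V) _ _ _ _ _ h8 h7) as h9.
  eapply is_derive_eqC; [exact h9|].
  apply injective_projections; simpl; ring.
Qed.


Lemma Dn_nz A B S z : 0 < S -> -4*S < A - B < 0 -> Cmod z < 1 -> Dn A B S z <> RtoC 0.
Proof.
  intros HS [Hm1 Hm2] Hz E. destruct z as [x y].
  assert (Hxy : x^2 + y^2 < 1).
  { unfold Cmod in Hz. simpl in Hz.
    destruct (Rlt_or_le (x^2+y^2) 1) as [h|h]; auto. exfalso.
    apply sqrt_le_1_alt in h. rewrite sqrt_1 in h. replace (x ^ 2 + y ^ 2) with (x * (x * 1) + y * (y * 1)) in h by ring. lra. }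
  pose proof (f_equal fst E) as E1. pose proof (f_equal snd E) as E2.
  unfold Dn in E1, E2. simpl in E1, E2.
  destruct (Req_dec y 0) as [Hy|Hy].
  - subst y. destruct (Rlt_or_le x 0) as [hx|hx].
    + assert (0 < (A - B + 4*S) * (-x)) by (apply Rmult_lt_0_compat; lra).
      assert (0 <= S*((x+1)*(x+1))) by (apply Rmult_le_pos; nra).
      nra.
    + assert (0 <= (B - A) * x) by (apply Rmult_le_pos; lra).
      assert (x < 1) by nra.
      assert (0 < S*((x-1)*(x-1))) by (apply Rmult_lt_0_compat; nra).
      nra.
  - assert (Hm : A - B = 2*S*(x-1)).
    { apply (Rmult_eq_reg_l y); [|exact Hy]. nra. }
    nra.
Qed.

Lemma derG N A B S z : Dn A B S z <> RtoC 0 ->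
  derC (fun t => (RtoC N * t / Dn A B S t)%C) z
    (RtoC N / Dn A B S z - RtoC N * z * (RtoC A - RtoC B - (2 * (z - RtoC 1)) * RtoC S) / (Dn A B S z * Dn A B S z))%C.
Proof.
  intros HD.
  pose (V := AbsRing_NormedModule C_AbsRing).
  pose proof (is_derive_const (K:=C_AbsRing) (V:=V) (RtoC N) z) as h1.
  pose proof (is_derive_id (K:=C_AbsRing) z) as h2.
  pose proof (is_derive_mult _ _ _ _ _ h1 h2 Ccomm) as h3.
  pose proof (is_derive_comp (V:=V) (fun u => Cinv u) (Dn A B S) z _ _ (is_derive_Cinv _ HD) (der_D A B S z)) as h4.
  pose proof (is_derive_mult _ _ _ _ _ h3 h4 Ccomm) as h5.
  eapply is_derive_eqC; [exact h5|].
  change ((0 * z + RtoC N * 1) * / Dn A B S z + RtoC N * z * ((RtoC A - RtoC B - (2 * (z - RtoC 1)) * RtoC S) * - / (Dn A B S z * Dn A B S z)) = RtoC N / Dn A B S z - RtoC N * z * (RtoC A - RtoC B - (2 * (z - RtoC 1)) * RtoC S) / (Dn A B S z * Dn A B S z))%C.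
  field. exact HD.
Qed.

Lemma Cmult_eq0 a b : (a * b)%C = RtoC 0 -> a = RtoC 0 \/ b = RtoC 0.
Proof.
  intro E. pose proof (f_equal Cmod E) as E2. rewrite Cmod_mult, Cmod_0 in E2.
  destruct (Rmult_integral _ _ E2) as [h|h]; [left|right]; apply Cmod_eq_0; exact h.
Qed.

Lemma G_inj N A B S z w : N <> 0 -> S <> 0 ->
  Dn A B S z <> RtoC 0 -> Dn A B S w <> RtoC 0 -> Cmod z < 1 -> Cmod w < 1 ->
  (RtoC N * z / Dn A B S z)%C = (RtoC N * w / Dn A B S w)%C -> z = w.
Proof.
  intros HN HS Hz Hw Hz1 Hw1 E.
  assert (E2 : (RtoC N * z * Dn A B S w = RtoC N * w * Dn A B S z)%C).
  { replace (RtoC N * z * Dn A B S w)%C with ((RtoC N * z / Dn A B S z) * (Dn A B S z * Dn A B S w))%C by (field; exact Hz).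
    rewrite E. field. exact Hw. }
  assert (E3 : ((RtoC N * - RtoC S) * ((z - w) * (1 - z * w)))%C = RtoC 0).
  { replace ((RtoC N * - RtoC S) * ((z - w) * (1 - z * w)))%C with (RtoC N * z * Dn A B S w - RtoC N * w * Dn A B S z)%C
      by (unfold Dn; ring).
    rewrite E2. ring. }
  destruct (Cmult_eq0 _ _ E3) as [h|h].
  - exfalso. destruct (Cmult_eq0 _ _ h) as [h'|h'].
    + apply HN. apply (f_equal fst) in h'. exact h'.
    + apply HS. apply (f_equal fst) in h'. simpl in h'. lra.
  - destruct (Cmult_eq0 _ _ h) as [h'|h'].
    + replace z with ((z - w) + w)%C by ring. rewrite h'. ring.
    + exfalso. assert (Hlt : Cmod (z * w) < 1).
      { rewrite Cmod_mult. pose proof (Cmod_ge_0 z). pose proof (Cmod_ge_0 w). nra. }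
      assert (Heq : (z * w = 1)%C).
      { replace (z * w)%C with (1 - (1 - z * w))%C by ring. rewrite h'. ring. }
      rewrite Heq, Cmod_1 in Hlt. lra.
Qed.


Lemma conv (f : C -> C) x l :
  derC f x l -> @is_derive C_AbsRing C_NormedModule f x l.
Proof. intros [Hl Hd]. split; [apply is_linear_scal_l|].
 intros x0 Hx eps. specialize (Hd x0 Hx eps).
 eapply filter_imp; [|exact Hd]. intros y Hy. exact Hy. Qed.

Lemma RtoC_nz r : r <> 0 -> RtoC r <> RtoC 0.
Proof. intros h E. apply h. apply (f_equal fst) in E. exact E. Qed.

Theorem lemma2 (mu a s1 : R) :
  0 < mu ->
  ((- (2 * mu / 9) < a < 0) \/ (0 < a < 4 * mu / 9)) ->
  2 * mu / 3 <= s1 ->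
  schlicht (F s1 a) /\ univalent_on unit_disc (H s1 a).
Proof.
  intros Hmu Ha Hs1.
  set (N := 27 * a ^ 2 * (2 * s1 - 3 * a)).
  set (A := 27 * a ^ 3). set (B := 27 * a ^ 2 * s1). set (S := s1 ^ 3).
  set (be := beta1 a s1).
  assert (Hs : 0 < s1) by lra.
  assert (Ha0 : a <> 0) by lra.
  assert (Ha2 : 0 < a ^ 2) by (apply pow2_gt_0; exact Ha0).
  assert (HS : 0 < S) by (unfold S; apply pow_lt; lra).
  assert (Hm2 : A - B < 0).
  { unfold A, B. replace (27 * a ^ 3 - 27 * a ^ 2 * s1) with (27 * a ^ 2 * (a - s1)) by ring.
    assert (0 < 27 * a^2 * (s1 - a)) by (apply Rmult_lt_0_compat; lra). lra. }
  assert (Hm1 : -4 * S < A - B).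
  { unfold A, B, S.
    assert (0 < (3*a + s1) * ((3*a - 2*s1)*(3*a-2*s1))).
    { apply Rmult_lt_0_compat; [lra|]. assert (3*a - 2*s1 < 0) by lra. nra. }
    replace (27 * a ^ 3 - 27 * a ^ 2 * s1) with ((3*a + s1) * ((3*a - 2*s1)*(3*a-2*s1)) - 4 * s1^3) by ring.
    lra. }
  assert (HN : N <> 0).
  { unfold N. assert (0 < 27 * a^2 * (2*s1 - 3*a)) by (apply Rmult_lt_0_compat; lra). lra. }
  assert (HNb : N = - S * be).
  { unfold N, S, be, beta1. field. lra. }
  assert (Hbe : be <> 0).
  { intro E. rewrite E in HNb. apply HN. rewrite HNb. ring. }
  assert (HH : forall z, H s1 a z = (RtoC N * z / Dn A B S z)%C) by reflexivity.
  assert (HD : forall z, unit_disc z -> Dn A B S z <> RtoC 0).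
  { intros z hz. apply Dn_nz; auto. }
  assert (HderH : forall z, unit_disc z -> exists l, derC (H s1 a) z l).
  { intros z hz. eexists. exact (derG N A B S z (HD z hz)). }
  assert (HinjH : forall z w, unit_disc z -> unit_disc w -> H s1 a z = H s1 a w -> z = w).
  { intros z w hz hw E. rewrite !HH in E.
    apply (G_inj N A B S z w HN ltac:(lra) (HD z hz) (HD w hw) hz hw E). }
  pose (V := AbsRing_NormedModule C_AbsRing).
  assert (HderF : forall z l, derC (H s1 a) z l ->
     derC (F s1 a) z (plus (mult l (/ RtoC be)%C) (mult (H s1 a z) zero))).
  { intros z l h. 
    pose proof (is_derive_const (K:=C_AbsRing) (V:=V) (/ RtoC be)%C z) as h1.
    exact (is_derive_mult _ _ _ _ _ h h1 Ccomm). }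
  split; [split; [split|split]|split].
  - intros z hz. destruct (HderH z hz) as [l hl]. eexists. apply conv. exact (HderF _ _ hl).
  - intros z w hz hw E. apply HinjH; auto.
    unfold F in E. unfold Cdiv in E. fold be in E.
    replace (H s1 a z) with (H s1 a z * / RtoC be * RtoC be)%C by (field; apply RtoC_nz; exact Hbe).
    rewrite E. field. apply RtoC_nz; exact Hbe.
  - unfold F, H, Cdiv. ring.
  - apply conv. eapply is_derive_eqC; [exact (HderF _ _ (derG N A B S (RtoC 0) (HD (RtoC 0) ltac:(unfold unit_disc; rewrite Cmod_0; lra))))|].
    assert (ED : Dn A B S (RtoC 0) = (- RtoC S)%C) by (unfold Dn; ring).
    change ((RtoC N / Dn A B S 0 - RtoC N * 0 * (RtoC A - RtoC B - (2 * (0 - RtoC 1)) * RtoC S) / (Dn A B S 0 * Dn A B S 0)) * / RtoC be + H s1 a 0 * 0 = 1)%C.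
    rewrite ED, HNb, RtoC_mult, RtoC_opp.
    field. split; apply RtoC_nz; lra.
  - intros z hz. destruct (HderH z hz) as [l hl]. eexists. apply conv. exact hl.
  - exact HinjH.
Qed.
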